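(* Let $Q=\Diamond abcd$ be a convex quadrilateral with vertices $a,b,c,d$ in clockwise order, such that the diagonal $\overline{ac}$ is horizontal, $|ac|=1$, and $1$ is the diameter of $Q$. Let the smallest axis-parallel rectangle containing $Q$ have horizontal side length $1$ and vertical side length $W$ with $\frac{2}{\sqrt5}<W\le 1$, with $a$ on its left side, $b$ on its top side, $c$ on its right side and $d$ on its bottom side. Then there exists a triangle contained in $Q$ whose smallest side has length at least $\frac{\sqrt{1+5W^2}}{4}$. *)

(* Defs.v *)
From Stdlib Require Import Reals.
Open Scope R_scope.

Definition point := (R * R)%type.

Definition px (p : point) : R := fst p.
Definition py (p : point) : R := snd p.

Definition edist (p q : point) : R :=
  sqrt ((px p - px q) ^ 2 + (py p - py q) ^ 2).

(* Signed area (cross product) of (q - p) x (r - p); negative = clockwise turn *)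
Definition orient (p q r : point) : R :=
  (px q - px p) * (py r - py p) - (py q - py p) * (px r - px p).

Definition convex_quad_cw (a b c d : point) : Prop :=
  orient a b c < 0 /\ orient b c d < 0 /\ orient c d a < 0 /\ orient d a b < 0.

Definition quad_region (a b c d : point) (p : point) : Prop :=
  exists la lb lc ld : R,
    0 <= la /\ 0 <= lb /\ 0 <= lc /\ 0 <= ld /\ la + lb + lc + ld = 1 /\
    px p = la * px a + lb * px b + lc * px c + ld * px d /\
    py p = la * py a + lb * py b + lc * py c + ld * py d.

Definition tri_region (p q r : point) (z : point) : Prop :=
  exists l1 l2 l3 : R,
    0 <= l1 /\ 0 <= l2 /\ 0 <= l3 /\ l1 + l2 + l3 = 1 /\
    px z = l1 * px p + l2 * px q + l3 * px r /\
    py z = l1 * py p + l2 * py q + l3 * py r.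

Definition is_triangle (p q r : point) : Prop := orient p q r <> 0.

Definition has_diameter (S : point -> Prop) (D : R) : Prop :=
  (forall p q, S p -> S q -> edist p q <= D) /\
  (exists p q, S p /\ S q /\ edist p q = D).

Definition min3 (x y z : R) : R := Rmin x (Rmin y z).

(* Main.v *)
Require Import Defs.
From Stdlib Require Import Reals Lra Psatz.
Open Scope R_scope.

Lemma core x y h1 h2 : 0<=x<=1 -> 0<=y<=1 -> 0<h1 -> 0<h2 ->
  x^2+h1^2<=1 -> (1-x)^2+h1^2<=1 -> y^2+h2^2<=1 -> (1-y)^2+h2^2<=1 ->
  (x-y)^2+(h1+h2)^2<=1 -> 4 < 5*(h1+h2)^2 -> h1+h2<=1 -> h2<=h1 -> 1/2<=x ->
  (1+5*(h1+h2)^2)/16 <= x^2+h1^2 /\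
  (1+5*(h1+h2)^2)/16 <= (x-3/5-2*y/5)^2+(h1+2*h2/5)^2 /\
  (1+5*(h1+h2)^2)/16 <= (3/5+2*y/5)^2+(2*h2/5)^2.
Proof.
  intros. split; [nra|split].
  { assert (h1+2*h2/5 >= 7/10*(h1+h2)) by lra.
    assert ((h1+2*h2/5)^2 >= (7/10*(h1+h2))^2) by nra.
    assert (0 <= (x-3/5-2*y/5)^2) by apply pow2_ge_0.
    lra. }
  destruct (Rle_lt_dec (1/2) y).
  - nra.
  - assert ((1/2-y)^2+(h1+h2)^2<=1) by nra. nra.
Qed.

Definition mix (p q : point) (s : R) : point :=
  (s * px p + (1-s) * px q, s * py p + (1-s) * py q).

Lemma quad_mix a b c d p q s : quad_region a b c d p -> quad_region a b c d q ->
  0 <= s <= 1 -> quad_region a b c d (mix p q s).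
Proof.
  intros [pa [pb [pc [pd [H1 [H2 [H3 [H4 [H5 [H6 H7]]]]]]]]]]
         [qa [qb [qc [qd [G1 [G2 [G3 [G4 [G5 [G6 G7]]]]]]]]]] Hs.
  exists (s*pa+(1-s)*qa), (s*pb+(1-s)*qb), (s*pc+(1-s)*qc), (s*pd+(1-s)*qd).
  unfold mix, px, py in *; simpl.
  repeat split; try nra.
  all: try (rewrite H6, G6; ring).
  all: try (rewrite H7, G7; ring).
Qed.

Lemma quad_convex a b c d p q r : quad_region a b c d p -> quad_region a b c d q ->
  quad_region a b c d r -> forall z, tri_region p q r z -> quad_region a b c d z.
Proof.
  intros [pa [pb [pc [pd [H1 [H2 [H3 [H4 [H5 [H6 H7]]]]]]]]]]
         [qa [qb [qc [qd [G1 [G2 [G3 [G4 [G5 [G6 G7]]]]]]]]]]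
         [ra [rb [rc [rd [K1 [K2 [K3 [K4 [K5 [K6 K7]]]]]]]]]]
         z [l1 [l2 [l3 [L1 [L2 [L3 [L4 [L5 L6]]]]]]]].
  exists (l1*pa+l2*qa+l3*ra), (l1*pb+l2*qb+l3*rb), (l1*pc+l2*qc+l3*rc), (l1*pd+l2*qd+l3*rd).
  repeat split; try nra.
  all: try (rewrite L5, H6, G6, K6; ring).
  all: try (rewrite L6, H7, G7, K7; ring).
Qed.

Lemma qa a b c d : quad_region a b c d a.
Proof. exists 1, 0, 0, 0. repeat split; lra. Qed.
Lemma qb a b c d : quad_region a b c d b.
Proof. exists 0, 1, 0, 0. repeat split; lra. Qed.
Lemma qc a b c d : quad_region a b c d c.
Proof. exists 0, 0, 1, 0. repeat split; lra. Qed.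
Lemma qd a b c d : quad_region a b c d d.
Proof. exists 0, 0, 0, 1. repeat split; lra. Qed.

Lemma sq_le1 x : 0 <= x -> sqrt x <= 1 -> x <= 1.
Proof.
  intros H0 H. destruct (Rle_lt_dec x 1); auto.
  assert (sqrt 1 < sqrt x) by (apply sqrt_lt_1_alt; lra). rewrite sqrt_1 in H1. lra.
Qed.

Lemma dist1 p q : edist p q <= 1 -> (px p - px q)^2 + (py p - py q)^2 <= 1.
Proof. unfold edist. intros H. apply sq_le1; [|exact H]. apply Rplus_le_le_0_compat; apply pow2_ge_0. Qed.

Lemma dist_ge W p q D : (1+5*W^2)/16 <= D -> D = (px p - px q)^2 + (py p - py q)^2 ->
  sqrt (1 + 5 * W ^ 2) / 4 <= edist p q.
Proof.
  intros H E. unfold edist. rewrite <- E.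
  assert (sqrt 16 = 4).
  { replace 16 with (4*4) by lra. apply sqrt_square; lra. }
  assert (sqrt (1+5*W^2) <= sqrt (16*D)) by (apply sqrt_le_1_alt; lra).
  rewrite sqrt_mult_alt, H0 in H1 by lra. lra.
Qed.

Lemma min3_ge t x y z : t <= x -> t <= y -> t <= z -> min3 x y z >= t.
Proof.
  intros. unfold min3. apply Rle_ge. apply Rmin_glb; auto. apply Rmin_glb; auto.
Qed.

Theorem theorem2 (a b c d : point) (W : R) :
  convex_quad_cw a b c d ->
  (* diagonal ac horizontal, of length 1 *)
  py a = py c ->
  edist a c = 1 ->
  (* diameter of Q is 1 *)
  has_diameter (quad_region a b c d) 1 ->
  (* smallest axis-parallel bounding rectangle: [px a, px c] x [py d, py b],
     so a on the left side, c on the right, b on top, d on the bottom *)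
  (forall p, quad_region a b c d p ->
     px a <= px p <= px c /\ py d <= py p <= py b) ->
  px c - px a = 1 ->
  py b - py d = W ->
  2 / sqrt 5 < W <= 1 ->
  exists p q r : point,
    is_triangle p q r /\
    (forall z, tri_region p q r z -> quad_region a b c d z) /\
    min3 (edist p q) (edist q r) (edist r p) >= sqrt (1 + 5 * W ^ 2) / 4.
Proof.
  intros Hconv Hac Hedist Hdiam Hbox Hw HW [HW1 HW2].
  destruct Hdiam as [Hd _].
  pose proof (dist1 _ _ (Hd a b (qa a b c d) (qb a b c d))) as Dab.
  pose proof (dist1 _ _ (Hd c b (qc a b c d) (qb a b c d))) as Dcb.
  pose proof (dist1 _ _ (Hd a d (qa a b c d) (qd a b c d))) as Dad.
  pose proof (dist1 _ _ (Hd c d (qc a b c d) (qd a b c d))) as Dcd.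
  pose proof (dist1 _ _ (Hd b d (qb a b c d) (qd a b c d))) as Dbd.
  pose proof (Hbox b (qb a b c d)) as Bb.
  pose proof (Hbox d (qd a b c d)) as Bd.
  assert (W5 : 4 < 5 * W^2).
  { assert (Hs : sqrt 5 * sqrt 5 = 5) by (apply sqrt_sqrt; lra).
    assert (Hs0 : 0 < sqrt 5) by (apply sqrt_lt_R0; lra).
    assert (2 < W * sqrt 5).
    { apply (Rmult_lt_compat_r (sqrt 5)) in HW1; auto.
      unfold Rdiv in HW1. rewrite Rmult_assoc, Rinv_l in HW1 by lra. lra. }
    nra. }
  clear Hd Hbox Hedist.
  destruct a as [ax ay], b as [bx by_], c as [cx cy], d as [dx dy].
  unfold convex_quad_cw, orient, px, py in *; simpl in *.
  subst W. subst cy. assert (cx = ax + 1) by lra. subst cx.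
  destruct Hconv as [O1 [O2 [O3 O4]]].
  destruct (Rle_lt_dec (ay-dy) (by_-ay)) as [Hh|Hh];
  [destruct (Rle_lt_dec (1/2) (bx-ax)) as [Hx|Hx] |
   destruct (Rle_lt_dec (1/2) (dx-ax)) as [Hx|Hx]].
  - destruct (core (bx-ax) (dx-ax) (by_-ay) (ay-dy)) as [C1 [C2 C3]]; try lra. idtac. 
    exists (ax,ay), (bx,by_), (mix (ax+1,ay) (dx,dy) (3/5)).
    split; [|split].
    + unfold is_triangle, orient, mix, px, py; simpl. lra.
    + apply quad_convex; [apply qa | apply qb | apply quad_mix; [apply qc|apply qd|lra]].
    + apply min3_ge.
      * eapply dist_ge with (D := (bx-ax)^2+(by_-ay)^2); [lra| unfold px,py; simpl; lra].
      * eapply dist_ge with (D := ((bx-ax)-3/5-2*(dx-ax)/5)^2+((by_-ay)+2*(ay-dy)/5)^2);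
          [lra| unfold mix, px,py; simpl; lra].
      * eapply dist_ge with (D := (3/5+2*(dx-ax)/5)^2+(2*(ay-dy)/5)^2);
          [lra| unfold mix, px,py; simpl; lra].
  - destruct (core (1-(bx-ax)) (1-(dx-ax)) (by_-ay) (ay-dy)) as [C1 [C2 C3]]; try lra.
    exists (ax+1,ay), (bx,by_), (mix (ax,ay) (dx,dy) (3/5)).
    split; [|split].
    + unfold is_triangle, orient, mix, px, py; simpl. lra.
    + apply quad_convex; [apply qc | apply qb | apply quad_mix; [apply qa|apply qd|lra]].
    + apply min3_ge.
      * eapply dist_ge with (D := (1-(bx-ax))^2+(by_-ay)^2); [lra| unfold mix, px,py; simpl; lra].
      * eapply dist_ge with (D := ((1-(bx-ax))-3/5-2*(1-(dx-ax))/5)^2+((by_-ay)+2*(ay-dy)/5)^2); [lra| unfold mix, px,py; simpl; lra].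
      * eapply dist_ge with (D := (3/5+2*(1-(dx-ax))/5)^2+(2*(ay-dy)/5)^2); [lra| unfold mix, px,py; simpl; lra].
  - destruct (core (dx-ax) (bx-ax) (ay-dy) (by_-ay)) as [C1 [C2 C3]]; try lra.
    exists (ax,ay), (dx,dy), (mix (ax+1,ay) (bx,by_) (3/5)).
    split; [|split].
    + unfold is_triangle, orient, mix, px, py; simpl. lra.
    + apply quad_convex; [apply qa | apply qd | apply quad_mix; [apply qc|apply qb|lra]].
    + apply min3_ge.
      * eapply dist_ge with (D := (dx-ax)^2+(ay-dy)^2); [lra| unfold mix, px,py; simpl; lra].
      * eapply dist_ge with (D := ((dx-ax)-3/5-2*(bx-ax)/5)^2+((ay-dy)+2*(by_-ay)/5)^2); [lra| unfold mix, px,py; simpl; lra].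
      * eapply dist_ge with (D := (3/5+2*(bx-ax)/5)^2+(2*(by_-ay)/5)^2); [lra| unfold mix, px,py; simpl; lra].
  - destruct (core (1-(dx-ax)) (1-(bx-ax)) (ay-dy) (by_-ay)) as [C1 [C2 C3]]; try lra.
    exists (ax+1,ay), (dx,dy), (mix (ax,ay) (bx,by_) (3/5)).
    split; [|split].
    + unfold is_triangle, orient, mix, px, py; simpl. lra.
    + apply quad_convex; [apply qc | apply qd | apply quad_mix; [apply qa|apply qb|lra]].
    + apply min3_ge.
      * eapply dist_ge with (D := (1-(dx-ax))^2+(ay-dy)^2); [lra| unfold mix, px,py; simpl; lra].
      * eapply dist_ge with (D := ((1-(dx-ax))-3/5-2*(1-(bx-ax))/5)^2+((ay-dy)+2*(by_-ay)/5)^2); [lra| unfold mix, px,py; simpl; lra].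
      * eapply dist_ge with (D := (3/5+2*(1-(bx-ax))/5)^2+(2*(by_-ay)/5)^2); [lra| unfold mix, px,py; simpl; lra].
Qed.
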